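(* Let $S$ be a semiring satisfying the standing assumptions below, and let $V$ and $W$ be finitely generated semimodules over $S$. If $T: V \to W$ is an injective linear transformation, then $T$ preserves dimension (i.e. $\dim(T(U)) = \dim(U)$ for every subsemimodule $U$ of $V$) and $T$ maps every basis of $V$ onto a basis of $T(V)$.
   Context: A semiring $(S,+,\cdot)$ here means: $(S,+)$ is a commutative monoid with zero $0$, $(S,\cdot)$ is a commutative monoid with identity $1$, multiplication distributes over addition, and $0$ is absorbing. Standing assumptions on $S$: $S$ is additively idempotent ($a+a=a$), multiplicatively cancellative (for every nonzero $a$, $ba=ca$ implies $b=c$), and additively unit irreducible (if $a+b$ is a unit then $a$ or $b$ is a unit). A semimodule over $S$ is a nonempty subset of some $M_{m\times n}(S)$ (matrices over $S$) closed under addition and scalar multiplication; a subsemimodule is a semimodule contained in another. It is finitely generated if it is the set of $S$-linear combinations of a finite subset. Linear independence: no element lies in the span of the others; a basis is a linearly independent spanning set. All bases of a finitely generated semimodule have the same finite cardinality, called its dimension $\dim$. All semimodules considered are finitely generated. A map $T:V\to W$ is a linear transformation if $T(\alpha x+\beta y)=\alpha T(x)+\beta T(y)$ for all $\alpha,\beta\in S$, $x,y\in V$. *)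

(* Defs.v *)
From mathcomp Require Import all_boot all_algebra.
From Stdlib Require Import ClassicalEpsilon.
Set Implicit Arguments. Unset Strict Implicit. Unset Printing Implicit Defensive.
Import GRing.Theory.
Local Open Scope ring_scope.

Section SemiringDefs.
Variable S : comPzSemiRingType.

Definition sunit (a : S) : Prop := exists b : S, a * b = 1.

Definition add_idempotent : Prop := forall a : S, a + a = a.
Definition mul_cancellative : Prop :=
  forall a b c : S, a != 0 -> b * a = c * a -> b = c.
Definition add_unit_irreducible : Prop :=
  forall a b : S, sunit (a + b) -> sunit a \/ sunit b.

Variables m n : nat.
Notation M := 'M[S]_(m, n).

Definition semimodule (V : M -> Prop) : Prop :=
  (exists x, V x) /\
  (forall x y, V x -> V y -> V (x + y)) /\
  (forall (a : S) x, V x -> V (a *: x)).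

Definition in_span (s : seq M) (x : M) : Prop :=
  exists c : 'I_(size s) -> S, x = \sum_(i < size s) c i *: nth 0 s i.

Definition spans (V : M -> Prop) (s : seq M) : Prop :=
  forall x, V x <-> in_span s x.

Definition fin_generated (V : M -> Prop) : Prop := exists s, spans V s.

Definition lin_indep (s : seq M) : Prop :=
  forall i, (i < size s)%N -> ~ in_span (take i s ++ drop i.+1 s) (nth 0 s i).

Definition is_basis (V : M -> Prop) (B : seq M) : Prop :=
  lin_indep B /\ spans V B.

(* dimension: the (common) cardinality of a basis *)
Definition sdim (V : M -> Prop) : nat :=
  epsilon (inhabits 0%N) (fun d => exists B, is_basis V B /\ size B = d).

Definition subsemimodule (U V : M -> Prop) : Prop :=
  semimodule U /\ forall x, U x -> V x.

End SemiringDefs.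

Section MapDefs.
Variable S : comPzSemiRingType.
Variables m n p q : nat.

Definition img (T : 'M[S]_(m, n) -> 'M[S]_(p, q)) (U : 'M[S]_(m, n) -> Prop)
  : 'M[S]_(p, q) -> Prop := fun y => exists2 x, U x & y = T x.

Definition linear_on (V : 'M[S]_(m, n) -> Prop) (W : 'M[S]_(p, q) -> Prop)
  (T : 'M[S]_(m, n) -> 'M[S]_(p, q)) : Prop :=
  (forall x, V x -> W (T x)) /\
  (forall (a b : S) x y, V x -> V y -> T (a *: x + b *: y) = a *: T x + b *: T y).

Definition injective_on (V : 'M[S]_(m, n) -> Prop)
  (T : 'M[S]_(m, n) -> 'M[S]_(p, q)) : Prop :=
  forall x y, V x -> V y -> T x = T y -> x = y.
End MapDefs.

(* Main.v *)
Require Import Defs.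
From mathcomp Require Import all_boot all_algebra.
From Stdlib Require Import ClassicalEpsilon FunctionalExtensionality PropExtensionality.
Set Implicit Arguments. Unset Strict Implicit. Unset Printing Implicit Defensive.
Import GRing.Theory.
Local Open Scope ring_scope.

Section Aux.
Variable S : comPzSemiRingType.
Variables m n : nat.
Notation M := 'M[S]_(m, n).

Lemma in_spanE (s : seq M) x :
  in_span s x <-> exists f : nat -> S, x = \sum_(i < size s) f i *: nth 0 s i.
Proof.
split.
- case=> c ->.
  exists (fun j => if insub j is Some o then c o else 0).
  by apply: eq_bigr => i _; rewrite valK.
- by case=> f ->; exists (fun i => f i).
Qed.

Lemma in_span_nil x : in_span (Nil M) x <-> x = 0.
Proof.
rewrite in_spanE; split.
- by case=> f ->; rewrite big_ord0.
- by move=> ->; exists (fun _ => 0); rewrite big_ord0.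
Qed.

Lemma in_span_cons a (s : seq M) x :
  in_span (a :: s) x <-> exists c y, in_span s y /\ x = c *: a + y.
Proof.
rewrite in_spanE; split.
- case=> f ->; rewrite /= big_ord_recl /=.
  exists (f 0%N), (\sum_(i < size s) f (bump 0 i) *: nth 0 s i); split => //.
  by apply/in_spanE; exists (fun i => f i.+1).
- case=> c [y [/in_spanE [f ->] ->]].
  exists (fun i => if i is j.+1 then f j else c).
  by rewrite /= big_ord_recl.
Qed.

Lemma in_span0 (s : seq M) : in_span s 0.
Proof. by apply/in_spanE; exists (fun _ => 0); rewrite big1 // => i _; rewrite scale0r. Qed.

Lemma mem_span (s : seq M) a : a \in s -> in_span s a.
Proof.
elim: s => // b s IH; rewrite inE => /orP [/eqP ->|ha].
- by apply/in_span_cons; exists 1, 0; split; [apply: in_span0| rewrite scale1r addr0].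
- by apply/in_span_cons; exists 0, a; split; [apply: IH| rewrite scale0r add0r].
Qed.

End Aux.

Section Aux2.
Variable S : comPzSemiRingType.
Variables m n : nat.
Notation M := 'M[S]_(m, n).
Variable U : M -> Prop.
Hypothesis hU : semimodule U.

Lemma U0 : U 0.
Proof. case: hU => [[x Ux] [_ hs]]; by rewrite -(scale0r x); apply: hs. Qed.

Lemma span_closed (s : seq M) x :
  (forall a, a \in s -> U a) -> in_span s x -> U x.
Proof.
elim: s x => [|a s IH] x hs.
- by move/in_span_nil => ->; apply: U0.
- case/in_span_cons => c [y [hy ->]].
  case: hU => [_ [hadd hsc]]; apply: hadd; first by apply: hsc; apply: hs; rewrite inE eqxx.
  by apply: IH hy => b hb; apply: hs; rewrite inE hb orbT.
Qed.

Variables p q : nat.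
Variable T : M -> 'M[S]_(p, q).
Hypothesis lin : forall (a b : S) x y, U x -> U y -> T (a *: x + b *: y) = a *: T x + b *: T y.
Hypothesis inj : forall x y, U x -> U y -> T x = T y -> x = y.

Lemma T0 : T 0 = 0.
Proof.
move: (lin 0 0 U0 U0); by rewrite !scale0r !addr0.
Qed.

Lemma span_map (s : seq M) y : (forall a, a \in s -> U a) ->
  in_span (map T s) y <-> exists2 x, in_span s x & y = T x.
Proof.
elim: s y => [|a s IH] y hs /=.
- rewrite in_span_nil; split.
  + by move=> ->; exists 0; [apply/in_span_nil | rewrite T0].
  + by case=> x /in_span_nil -> ->; rewrite T0.
- have hs' : forall b, b \in s -> U b by move=> b hb; apply: hs; rewrite inE hb orbT.
  have Ua : U a by apply: hs; rewrite inE eqxx.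
  rewrite in_span_cons; split.
  + case=> c [y' [/(IH _ hs') [x' hx' ->] ->]].
    exists (c *: a + x'); first by apply/in_span_cons; exists c, x'.
    by rewrite -{2}(scale1r x') lin ?scale1r //; apply: span_closed hx'.
  + case=> x /in_span_cons [c [x' [hx' ->]] ->].
    exists c, (T x'); split; first by apply/IH => //; exists x'.
    by rewrite -{1}(scale1r x') lin ?scale1r //; apply: span_closed hx'.
Qed.

Lemma basis_map (s : seq M) : is_basis U s -> is_basis (img T U) (map T s).
Proof.
case=> hind hsp.
have hs : forall a, a \in s -> U a by move=> a /mem_span /hsp.
split.
- move=> i; rewrite size_map => hi.
  rewrite -map_take -map_drop -map_cat (nth_map 0 0) //.
  have hr : forall a, a \in take i s ++ drop i.+1 s -> U a.
    by move=> a; rewrite mem_cat => /orP [/mem_take|/mem_drop]; apply: hs.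
  case/(span_map _ hr) => x hx hT.
  apply: (hind i hi); suff -> : nth 0 s i = x by [].
  apply: inj hT; first by apply: hs; apply: mem_nth.
  by apply: span_closed hx.
- move=> y; rewrite span_map //; split.
  + by case=> x /hsp hx ->; exists x.
  + by case=> x /hsp hx ->; exists x.
Qed.

Lemma basis_unmap (B : seq 'M[S]_(p, q)) : is_basis (img T U) B ->
  exists2 s : seq M, is_basis U s & B = map T s.
Proof.
move=> hB.
have [s hs eB] : exists2 s : seq M, (forall a, a \in s -> U a) & B = map T s.
  case: hB => _ hsp.
  have hB : forall b, b \in B -> img T U b by move=> b /mem_span /hsp.
  elim: B hB {hsp} => [|b B IH] hB; first by exists [::].
  case: (hB b); first by rewrite inE eqxx.
  move=> x Ux ->; case: IH => [c hc|s hs ->]; first by apply: hB; rewrite inE hc orbT.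
  by exists (x :: s) => // a; rewrite inE => /orP [/eqP ->|]; [| apply: hs].
subst B; exists s => //; case: hB => hind hsp; split.
- move=> i hi hx; have hi' : (i < size (map T s))%N by rewrite size_map.
  have H := hind i hi'. apply: H.
  rewrite -map_take -map_drop -map_cat (nth_map 0 0) //.
  have hr : forall a, a \in take i s ++ drop i.+1 s -> U a.
    by move=> a; rewrite mem_cat => /orP [/mem_take|/mem_drop]; apply: hs.
  by apply/span_map => //; exists (nth 0 s i).
- move=> x; split.
  + move=> Ux; have /hsp/(span_map _ hs) [x' hx' hT] : img T U (T x) by exists x.
    by rewrite (inj Ux _ hT) //; apply: span_closed hx'.
  + by apply: span_closed.
Qed.

End Aux2.

Theorem lemma2p7 (S : comPzSemiRingType)
  (hidem : add_idempotent S) (hcanc : mul_cancellative S)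
  (hirr : add_unit_irreducible S)
  (m n p q : nat) (V : 'M[S]_(m, n) -> Prop) (W : 'M[S]_(p, q) -> Prop)
  (hV : semimodule V) (hVfg : fin_generated V)
  (hW : semimodule W) (hWfg : fin_generated W)
  (T : 'M[S]_(m, n) -> 'M[S]_(p, q))
  (hT : linear_on V W T) (hinj : injective_on V T) :
  (forall U : 'M[S]_(m, n) -> Prop,
      subsemimodule U V -> fin_generated U -> sdim (img T U) = sdim U) /\
  (forall B : seq 'M[S]_(m, n), is_basis V B -> is_basis (img T V) (map T B)).
Proof.
case: hT => _ hlin.
split; last first.
  by move=> B; apply: basis_map => // x y hx hy; apply: hinj.
move=> U [hU hUV] _.
have lin : forall (a b : S) x y, U x -> U y -> T (a *: x + b *: y) = a *: T x + b *: T y.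
  by move=> a b x y hx hy; apply: hlin; apply: hUV.
have inj : forall x y, U x -> U y -> T x = T y -> x = y.
  by move=> x y hx hy; apply: hinj; apply: hUV.
rewrite /sdim; congr (epsilon _ _).
apply: functional_extensionality => d; apply: propositional_extensionality; split.
- case=> B [/(basis_unmap hU lin inj) [s hs ->]]; rewrite size_map => <-.
  by exists s.
- case=> B [hB <-]; exists (map T B); split; last by rewrite size_map.
  exact: basis_map.
Qed.
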